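(* Let $A$ be a finite alphabet containing a distinguished element $0$, let $\nu$ be a shift-invariant probability measure on $A^{\mathbb{Z}}$, and let $\mathbf{Y}=(A^{\mathbb{Z}},\mathcal{B},\nu,S)$ with $S$ the left shift. Let $\tau$ be the cellular automaton $\tau((a_n)_n)=(\tau_0(a_n,a_{n+1}))_n$ with $\tau_0(\alpha_1,\alpha_2)=\alpha_1$ if $\alpha_1=\alpha_2$ and $0$ otherwise, and let $\xi$ be the coordinate process on $\mathbf{Y}$. Then for every $n\ge1$, $$h_\nu(\tau^n\xi,S)\le\frac{\log(\#A\, n^2)}{n}.$$
   Context: The coordinate process is $\xi_i(a)=a_i$; $\tau^n\xi$ is the process $((\tau^n a)_i)_{i\in\mathbb{Z}}$, i.e. the $S$-process generated by the finite-valued random variable $a\mapsto(\tau^na)_0$. For a finite-valued process $\eta$, $h_\nu(\eta,S)=\lim_n\frac1nH_\nu(\eta_{[0,n]})$ with $H_\nu$ Shannon entropy. *)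

(* Defs.v *)
From HB Require Import structures.
From mathcomp Require Import all_boot all_order all_algebra.
From mathcomp Require Import all_classical all_reals all_analysis.
Set Implicit Arguments. Unset Strict Implicit. Unset Printing Implicit Defensive.
Import Order.TTheory GRing.Theory Num.Theory.
Import numFieldTopology.Exports numFieldNormedType.Exports.
Local Open Scope classical_set_scope.
Local Open Scope ring_scope.

(* The distinguished symbol a0
   (the paper's "0") is also used as the default point (constant configuration),
   which the library's generated-sigma-algebra construction requires. *)
Definition Aseq (A : finType) (a0 : A) : Type := int -> A.
HB.instance Definition _ (A : finType) (a0 : A) := Choice.on (@Aseq A a0).
HB.instance Definition _ (A : finType) (a0 : A) :=
  isPointed.Build (@Aseq A a0) (fun _ => a0).

Definition cylinders (A : finType) (a0 : A) : set (set (@Aseq A a0)) :=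
  fun B => exists (i : int) (x : A), B = [set a : @Aseq A a0 | a i = x].

Definition AZ (A : finType) (a0 : A) := g_sigma_algebraType (@cylinders A a0).

Definition shift (A : finType) (a0 : A) (a : @AZ A a0) : @AZ A a0 :=
  fun i => a (i + 1).

Definition tau0 (A : finType) (a0 : A) (x y : A) : A := if x == y then x else a0.
Definition tau (A : finType) (a0 : A) (a : @AZ A a0) : @AZ A a0 :=
  fun i => tau0 a0 (a i) (a (i + 1)).

Definition shift_invariant (R : realType) (A : finType) (a0 : A)
  (nu : probability (@AZ A a0) R) : Prop :=
  forall B : set (@AZ A a0), measurable B -> nu (@shift A a0 @^-1` B) = nu B.

(* For f : A^Z -> A^Z, the finite-valued process eta_i(a) = (f a)_i
   (with f = tau^n this is tau^n xi).  Law of the block eta_[0,m]: *)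
Definition block_prob (R : realType) (A : finType) (a0 : A)
  (nu : probability (@AZ A a0) R) (f : @AZ A a0 -> @AZ A a0) (m : nat)
  (w : {ffun 'I_m.+1 -> A}) : R :=
  fine (nu [set a : @AZ A a0 | forall i : 'I_m.+1, f a (Posz (val i)) = w i]).

(* Shannon entropy H_nu(eta_[0,m]) (natural log; 0 log 0 = 0). *)
Definition block_entropy (R : realType) (A : finType) (a0 : A)
  (nu : probability (@AZ A a0) R) (f : @AZ A a0 -> @AZ A a0) (m : nat) : R :=
  - \sum_(w : {ffun 'I_m.+1 -> A})
      block_prob nu f w * ln (block_prob nu f w).

Definition process_entropy (R : realType) (A : finType) (a0 : A)
  (nu : probability (@AZ A a0) R) (f : @AZ A a0 -> @AZ A a0) : R :=
  limn (fun m : nat => block_entropy nu f m / m%:R).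

(* Main.v *)
Require Import Defs.
From HB Require Import structures.
From mathcomp Require Import all_boot all_order all_algebra.
From mathcomp Require Import all_classical all_reals all_analysis.
From mathcomp Require Import zify lra.
Import Order.TTheory GRing.Theory Num.Theory.
Import numFieldTopology.Exports numFieldNormedType.Exports.
Local Open Scope classical_set_scope.
Local Open Scope ring_scope.

Section Comb.
Variables (A : finType) (a0 : A).

Lemma iter_tau n (a : AZ a0) (l : int) :
  iter n (@tau A a0) a l =
  if [forall t : 'I_n.+1, a (l + (t : nat)%:Z) == a l] then a l else a0.
Proof.
elim: n l => [|n IH] l /=.
  have -> : [forall t : 'I_1, a (l + (t : nat)%:Z) == a l].
    by apply/forallP => t; rewrite (ord1 t) /= addr0.
  by [].
rewrite /tau /tau0 !IH.
set P := [forall t : 'I_n.+1, _].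
set P1 := [forall t : 'I_n.+1, _].
set P2 := [forall t : 'I_n.+2, _].
have hi : P2 -> [/\ P, P1 & a (l + 1) = a l].
  move/forallP => H.
  have H1 : a (l + 1) = a l.
    have := H (inord 1); rewrite inordK // => /eqP; by [].
  split => //.
    apply/forallP => t; have := H (widen_ord (leqnSn _) t); by [].
  apply/forallP => t; rewrite H1.
  have := H (inord t.+1); rewrite inordK; last exact: (ltn_ord t).
  by have -> : l + (t.+1)%:Z = l + 1 + t%:Z by lia.
have hii : P -> P1 -> a (l + 1) = a l -> P2.
  move=> /forallP HP /forallP HP1 E1; apply/forallP => u.
  case: u => [[|k] Ht].
    by rewrite /= addr0.
  have := HP1 (Ordinal (Ht : k < n.+1)%N) => /=; rewrite E1.
  by have -> : l + 1 + k%:Z = l + (k.+1)%:Z by lia.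
case HP: P; case HP1: P1; case Heq: (a l == a (l + 1)).
- by rewrite (hii HP HP1 (esym (eqP Heq))).
- case HP2: P2 => //; case: (hi HP2) => _ _ H; by rewrite H eqxx in Heq.
- case HP2: P2; first by case: (hi HP2); rewrite HP1.
  by case: eqP => // ->.
- case HP2: P2; first by case: (hi HP2); rewrite HP1.
  by case: eqP => // ->.
all: case HP2: P2; first by case: (hi HP2); rewrite HP.
all: by case: ifP.
Qed.

Section Window.
Variables (n : nat) (al : nat -> A).
Definition beta (l : nat) : A :=
  if [forall t : 'I_n.+1, al (l + t) == al l] then al l else a0.

Lemma beta_ne0 l : beta l != a0 ->
  beta l = al l /\ forall t, (t <= n)%N -> al (l + t) = al l.
Proof.
rewrite /beta; case: ifP => [/forallP H _|]; last by rewrite eqxx.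
split => // t tn; exact/eqP/(H (Ordinal (tn : t < n.+1)%N)).
Qed.

Lemma beta_key l1 l2 l : beta l1 != a0 -> beta l2 != a0 ->
  (l1 <= l <= l2)%N -> (l2 <= l1 + n)%N -> beta l = beta l1.
Proof.
move=> /beta_ne0 [E1 H1] /beta_ne0 [E2 H2] /andP[h1 h2] h3.
have e21 : al l2 = al l1.
  by have := H1 (l2 - l1)%N; rewrite subnKC ?(leq_trans h1) //; apply; lia.
have G : forall u, (l1 <= u <= l2 + n)%N -> al u = al l1.
  move=> u /andP[u1 u2].
  case: (leqP u (l1 + n)) => hu.
    by have := H1 (u - l1)%N; rewrite subnKC //; apply; lia.
  have := H2 (u - l2)%N; rewrite subnKC; last by lia.
  by rewrite e21; apply; lia.
rewrite E1 /beta.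
have -> : [forall t : 'I_n.+1, al (l + t) == al l].
  apply/forallP => t; rewrite !G //; first by lia.
  by have := ltn_ord t; lia.
by apply: G; lia.
Qed.

Definition Win := (A * 'I_n * 'I_n)%type.
Definition decode (w : Win) (j : nat) : A :=
  if ((w.1.2 : nat) <= j <= w.2)%N then w.1.1 else a0.

Lemma window (n0 : (0 < n)%N) p0 : exists w : Win,
  forall j : 'I_n, beta (p0 + j) = decode w j.
Proof.
case: (pickP (fun j : 'I_n => beta (p0 + j) != a0)) => [j0 Hj0 | Hnone]; last first.
  exists (a0, Ordinal n0, Ordinal n0) => j; rewrite /decode.
  by have := Hnone j; rewrite /= => /negbFE/eqP ->; case: ifP.
case: (@arg_minnP _ j0 (fun j : 'I_n => beta (p0 + j) != a0) (fun j : 'I_n => nat_of_ord j) Hj0) => s Hs smin.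
case: (@arg_maxnP _ j0 (fun j : 'I_n => beta (p0 + j) != a0) (fun j : 'I_n => nat_of_ord j) Hj0) => e He emax.
exists (beta (p0 + s), s, e) => j; rewrite /decode /=.
case: ifP => hj.
  apply: (@beta_key (p0 + s) (p0 + e) (p0 + j) Hs He)%N; first by lia.
  by have := ltn_ord e; lia.
apply/eqP; apply/negPn/negP => Hj.
by move: hj (smin j Hj) (emax j Hj) => /negbT; rewrite negb_and -!ltnNge; lia.
Qed.
End Window.

Definition decodeW n m (c : {ffun 'I_(m %/ n).+1 -> Win n}) : {ffun 'I_m.+1 -> A} :=
  [ffun i : 'I_m.+1 => decode n (c (inord (i %/ n))) (i %% n)].

Lemma word_decode n m al (n0 : (0 < n)%N) :
  exists c, forall i : 'I_m.+1, beta n al i = decodeW n m c i.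
Proof.
have : forall q : 'I_(m %/ n).+1, exists w : Win n,
    forall j : 'I_n, beta n al (q * n + j) = decode n w j.
  by move=> q; apply: window.
case/fin_all_exists => c Hc; exists (finfun c) => i.
rewrite /decodeW !ffunE.
have hq : (i %/ n < (m %/ n).+1)%N.
  by rewrite ltnS leq_div2r // -ltnS.
have := Hc (inord (i %/ n)) (Ordinal (ltn_pmod i n0)).
by rewrite /= inordK // -divn_eq.
Qed.

Lemma iter_tau_beta n (a : AZ a0) (i : nat) :
  iter n (@tau A a0) a (Posz i) = beta n (fun j => a (Posz j)) i.
Proof.
rewrite iter_tau /beta.
by under eq_forallb => t do rewrite -PoszD.
Qed.
End Comb.

Section Meas.
Variables (A : finType) (a0 : A).

Lemma cyl_meas (i : int) (x : A) : measurable [set a : AZ a0 | a i = x].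
Proof. by apply: sub_sigma_algebra; exists i, x. Qed.

Lemma meas_dep K (l : nat) (G : pred {ffun 'I_K -> A}) :
  measurable [set a : AZ a0 | G [ffun t : 'I_K => a (Posz (l + t))]].
Proof.
rewrite (_ : [set a : AZ a0 | _] = \bigcup_(v in [set v | G v])
   \bigcap_(t in [set: 'I_K]) [set a : AZ a0 | a (Posz (l + t)) = v t]).
  apply: fin_bigcup_measurable; first exact: finite_finset.
  move=> v _; apply: fin_bigcap_measurable; first exact: finite_finset.
  by move=> t _; exact: cyl_meas.
apply/seteqP; split => a /=.
  move=> Ga; exists [ffun t : 'I_K => a (Posz (l + t))] => //.
  by move=> t _ /=; rewrite ffunE.
case=> v /= Gv Hv.
have -> // : [ffun t : 'I_K => a (Posz (l + t))] = v.
by apply/ffunP => t; rewrite ffunE; apply: Hv.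
Qed.

Lemma meas_coord n (i : nat) (x : A) :
  measurable [set a : AZ a0 | iter n (@tau A a0) a (Posz i) = x].
Proof.
pose G (v : {ffun 'I_n.+1 -> A}) :=
  (if [forall t, v t == v ord0] then v ord0 else a0) == x.
rewrite (_ : [set a : AZ a0 | _] = [set a : AZ a0 | G [ffun t : 'I_n.+1 => a (Posz (i + t))]]).
  exact: meas_dep.
have E : forall a : AZ a0, iter n (@tau A a0) a (Posz i) =
   (if [forall t, [ffun t : 'I_n.+1 => a (Posz (i + t))] t ==
        [ffun t : 'I_n.+1 => a (Posz (i + t))] ord0]
    then [ffun t : 'I_n.+1 => a (Posz (i + t))] ord0 else a0).
  move=> a; rewrite iter_tau_beta /beta !ffunE addn0.
  by congr (if _ then _ else _); apply: eq_forallb => t; rewrite ffunE.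
apply/seteqP; split => a /=; rewrite /G -E.
  by move=> ->.
by move/eqP.
Qed.

Definition Eset n m (w : {ffun 'I_m.+1 -> A}) : set (AZ a0) :=
  [set a : AZ a0 | forall i : 'I_m.+1, iter n (@tau A a0) a (Posz (val i)) = w i].

Lemma meas_E n m w : measurable (Eset n m w).
Proof.
rewrite (_ : Eset n m w = \bigcap_(i in [set: 'I_m.+1])
   [set a : AZ a0 | iter n (@tau A a0) a (Posz i) = w i]).
  apply: fin_bigcap_measurable; first exact: finite_finset.
  by move=> i _; exact: meas_coord.
apply/seteqP; split => a /= H i.
  by move=> _; apply: H.
exact: (H i I).
Qed.


Lemma sum_prob_le1 (R : realType) (nu : probability (AZ a0) R) n m :
  \sum_(w : {ffun 'I_m.+1 -> A}) fine (nu (Eset n m w)) <= 1.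
Proof.
rewrite sum_fine; last by move=> w _; apply: fin_num_measure; exact: meas_E.
have -> : (\sum_(w : {ffun 'I_m.+1 -> A}) nu (Eset n m w))%E = nu setT.
  have -> : [set: AZ a0] = \bigcup_(w in [set: {ffun 'I_m.+1 -> A}]) Eset n m w.
    apply/seteqP; split => a //= _.
    exists [ffun i : 'I_m.+1 => iter n (@tau A a0) a (Posz (val i))] => //.
    by move=> i; rewrite ffunE.
  rewrite measure_fin_bigcup //; last by move=> w _; exact: meas_E.
  - rewrite (fsbigE (enum {ffun 'I_m.+1 -> A})) ?enum_uniq //.
    + by rewrite big_enum_cond /=; apply: eq_bigl => i; rewrite in_setT.
    + by move=> i _; rewrite mem_enum.
  - exact: finite_finset.
  move=> w1 w2 _ _ [a [/= H1 H2]].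
  by apply/ffunP => i; rewrite -H1 -H2.
by rewrite probability_setT.
Qed.

End Meas.
Lemma ln_le_sub1 (R : realType) (x : R) : 0 < x -> ln x <= x - 1.
Proof.
move=> x0; have := @le_ln1Dx R (x - 1).
have -> : 1 + (x - 1) = x by rewrite addrC subrK.
by apply; lra.
Qed.

Lemma entropy_bound (R : realType) (I : finType) (p : I -> R) (S : {set I}) :
  (forall i, 0 <= p i) -> \sum_i p i <= 1 -> (forall i, i \notin S -> p i = 0) ->
  (0 < #|S|)%N ->
  - \sum_i p i * ln (p i) <= ln (#|S|%:R) + 1.
Proof.
move=> p0 p1 pS S0.
set N : R := #|S|%:R.
have N0 : 0 < N by rewrite ltr0n.
have lnN0 : 0 <= ln N by apply: ln_ge0; rewrite ler1n.
have term : forall i, - (p i * ln (p i)) <=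
    p i * ln N + (if i \in S then N^-1 else 0).
  move=> i; have [pz|pp] := eqVneq (p i) 0.
    rewrite pz mul0r oppr0 mul0r add0r; case: ifP => _ //.
    by rewrite invr_ge0 ltW.
  have ppos : 0 < p i by rewrite lt0r pp p0.
  have iS : i \in S by apply/negP => /negP /pS; apply/eqP.
  rewrite iS.
  have h := @ln_le_sub1 R ((p i * N)^-1).
  rewrite lnV ?posrE ?mulr_gt0 // lnM ?posrE // in h.
  have h2 := h (ltac:(by rewrite invr_gt0 mulr_gt0)).
  have : p i * (- (ln (p i) + ln N)) <= p i * ((p i * N)^-1 - 1).
    by rewrite ler_pM2l.
  rewrite invfM mulrBr mulr1 mulrA mulrV ?unitfE // mul1r.
  move=> h3; rewrite mulrN mulrDr opprD in h3.
  have : - (p i * ln (p i)) - p i * ln N <= N^-1 - p i by [].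
  lra.
rewrite -sumrN.
apply: le_trans (ler_sum _ (fun i _ => term i)) _.
rewrite big_split /= -big_mkcond /= sumr_const -/N -mulr_suml.
rewrite -[N^-1 *+ _]mulr_natr -/N mulVf ?gt_eqF //.
rewrite lerD2r mulrC ler_piMr //.
Qed.

Lemma Hm_bound (R : realType) (A : finType) (a0 : A)
    (nu : probability (@AZ A a0) R) n m (n0 : (0 < n)%N) :
  block_entropy nu (iter n (@tau A a0)) m <=
    (m %/ n).+1%:R * ln (#|A|%:R * n%:R ^+ 2) + 1.
Proof.
rewrite /block_entropy.
set Img := [set @decodeW A a0 n m c | c : {ffun 'I_(m %/ n).+1 -> Win A n}].
have Ipos : (0 < #|Img|)%N.
  apply/card_gt0P.
  exists (@decodeW A a0 n m [ffun _ => (a0, Ordinal n0, Ordinal n0)]).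
  by apply: imset_f.
apply: le_trans (@entropy_bound R _ _ Img _ _ _ Ipos) _.
- by move=> w; apply: fine_ge0; apply: measure_ge0.
- exact: (@sum_prob_le1 A a0 R nu n m).
- move=> w wI; rewrite /block_prob.
  have -> : [set a : AZ a0 | forall i : 'I_m.+1,
      iter n (@tau A a0) a (Posz (val i)) = w i] = set0.
    apply/seteqP; split => a //= Ha.
    case: (@word_decode A a0 n m (fun j => a (Posz j)) n0) => c Hc.
    move/negP: wI; apply; apply/imsetP; exists c => //.
    by apply/ffunP => i; rewrite -Ha iter_tau_beta Hc.
  by rewrite measure0.
rewrite lerD2r.
have c0 : (0 < #|A|)%N by apply/card_gt0P; exists a0.
have -> : (m %/ n).+1%:R * ln (#|A|%:R * n%:R ^+ 2) =
    ln ((#|A|%:R * n%:R ^+ 2) ^+ (m %/ n).+1) :> R.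
  by rewrite lnXn ?mulr_gt0 ?exprn_gt0 ?ltr0n // mulr_natl.
rewrite ler_ln ?posrE ?ltr0n ?exprn_gt0 ?mulr_gt0 ?ltr0n //.
have : (#|Img| <= (#|A| * n * n) ^ (m %/ n).+1)%N.
  apply: leq_trans (leq_imset_card _ _) _.
  by rewrite card_ffun !card_prod !card_ord.
move=> h.
rewrite -natrX -natrM -natrX ler_nat.
by move: h; rewrite -mulnA.
Qed.

Theorem proposition4p1 (R : realType) (A : finType) (a0 : A)
    (nu : probability (@AZ A a0) R) :
  shift_invariant nu ->
  forall n : nat, (0 < n)%N ->
    process_entropy nu (iter n (@tau A a0)) <=
      ln (#|A|%:R * n%:R ^+ 2) / n%:R.
Proof.
move=> _ n n0.
set L0 := ln (#|A|%:R * n%:R ^+ 2).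
have c0 : (0 < #|A|)%N by apply/card_gt0P; exists a0.
have L0ge0 : 0 <= L0.
  apply: ln_ge0; rewrite -natrX -natrM ler1n muln_gt0 c0 expn_gt0 n0.
  done.
rewrite /process_entropy.
set u := fun m : nat => _.
have [cu|du] := pselect (cvgn u); last first.
  rewrite dvgP //; exact: (divr_ge0 L0ge0 (ler0n _ _)).
apply/ler_addgt0Pr => e e0.
apply: limr_le => //.
have bd0 : 0 <= (L0 + 1) / e by apply: divr_ge0; [apply: addr_ge0 | apply: ltW].
exists (Num.Def.archi_bound ((L0 + 1) / e)) => // m /= hm.
have hN := archi_boundP bd0.
have mpos : 0 < m%:R :> R.
  apply: le_lt_trans bd0 (lt_le_trans hN _); by rewrite ler_nat.
rewrite /u ler_pdivrMr //.
apply: (le_trans (@Hm_bound R A a0 nu n m n0)).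
have hk : (m %/ n).+1%:R <= m%:R / n%:R + 1 :> R.
  rewrite -addn1 natrD lerD2r ler_pdivlMr ?ltr0n // -natrM ler_nat.
  exact: leq_trunc_div.
have hme : L0 + 1 < m%:R * e.
  rewrite -ltr_pdivrMr //; apply: (lt_le_trans hN); by rewrite ler_nat.
apply: (le_trans (y := (m%:R / n%:R + 1) * L0 + 1)).
  by rewrite lerD2r ler_wpM2r.
rewrite [in X in _ <= X]mulrDl.
have -> : L0 / n%:R * m%:R = m%:R / n%:R * L0 by rewrite mulrC mulrA mulrAC.
rewrite mulrDl mul1r.
lra.
Qed.
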